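(* Let $R$ be a reflexive relation on $U$. Then $\mathrm{DM(RS)}$ is spatial if and only if both $\wp(U)^{\blacktriangle}$ and $\wp(U)^{\vartriangle}$ are spatial.
   Context: Let $U$ be a set and $R\subseteq U\times U$ a binary relation. For $x\in U$, $R(x)=\{y\in U\mid (x,y)\in R\}$ and $\breve R(x)=\{y\in U\mid (y,x)\in R\}$. For $X\subseteq U$: $X^{\blacktriangledown}=\{x\in U\mid R(x)\subseteq X\}$, $X^{\blacktriangle}=\{x\in U\mid R(x)\cap X\neq\emptyset\}$, $X^{\triangledown}=\{x\in U\mid \breve R(x)\subseteq X\}$, $X^{\vartriangle}=\{x\in U\mid \breve R(x)\cap X\neq\emptyset\}$; composites like $X^{\vartriangle\blacktriangledown}$ mean $(X^{\vartriangle})^{\blacktriangledown}$. $\wp(U)^{\blacktriangledown}=\{X^{\blacktriangledown}\mid X\subseteq U\}$ and similarly $\wp(U)^{\blacktriangle},\wp(U)^{\vartriangle}$; complete lattices under $\subseteq$ (joins in $\wp(U)^{\blacktriangle},\wp(U)^{\vartriangle}$ are unions). $\mathcal S=\{x\in U\mid |R(x)|=1\}$. $\mathrm{RS}=\{(X^{\blacktriangledown},X^{\blacktriangle})\mid X\subseteq U\}$ ordered coordinatewise; $\mathrm{DM(RS)}$ is its Dedekind–MacNeille completion, identified with $\{(A,B)\in\wp(U)^{\blacktriangledown}\times\wp(U)^{\blacktriangle}\mid A^{\vartriangle\blacktriangle}\subseteq B,\ A\cap\mathcal S=B\cap\mathcal S\}$ ordered coordinatewise, with meets $\bigwedge_i(X_i,Y_i)=(\bigcap_iX_i,(\bigcap_iY_i)^{\triangledown\blacktriangle})$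 and joins $\bigvee_i(X_i,Y_i)=((\bigcup_iX_i)^{\vartriangle\blacktriangledown},\bigcup_iY_i)$. An element $j$ of a complete lattice $L$ is completely join-irreducible if $j=\bigvee S$ implies $j\in S$ for every $S\subseteq L$; $L$ is spatial if every element is the join of the completely join-irreducible elements below it. *)

(* Defs.v *)
From mathcomp Require Import all_boot.
From mathcomp Require Import boolp classical_sets.
Set Implicit Arguments. Unset Strict Implicit. Unset Printing Implicit Defensive.
Local Open Scope classical_set_scope.

Section RoughDefs.
Variables (U : Type) (R : U -> U -> Prop).

Definition Rimg (x : U) : set U := [set y | R x y].
Definition Rimg_inv (x : U) : set U := [set y | R y x].

Definition bdown (X : set U) : set U := [set x | Rimg x `<=` X].
Definition bup (X : set U) : set U := [set x | Rimg x `&` X !=set0].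
Definition wdown (X : set U) : set U := [set x | Rimg_inv x `<=` X].
Definition wup (X : set U) : set U := [set x | Rimg_inv x `&` X !=set0].

Definition Ssing : set U := [set x | exists y, Rimg x = [set y]].

(* the lattices  wp(U)^{black up}  and  wp(U)^{white up}  (as carriers, ordered by inclusion) *)
Definition Pbup : set (set U) := [set Y | exists X, Y = bup X].
Definition Pwup : set (set U) := [set Y | exists X, Y = wup X].

Definition DMRS : set (set U * set U) :=
  [set p | (exists X, p.1 = bdown X) /\ (exists X, p.2 = bup X) /\
           bup (wup p.1) `<=` p.2 /\ p.1 `&` Ssing = p.2 `&` Ssing].
End RoughDefs.

Definition set_le (U : Type) (A B : set U) : Prop := A `<=` B.
Definition pair_le (U : Type) (p q : set U * set U) : Prop :=
  p.1 `<=` q.1 /\ p.2 `<=` q.2.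

Section Spatial.
Variables (T : Type) (P : set T) (le : T -> T -> Prop).

Definition is_join (S : set T) (x : T) : Prop :=
  P x /\ (forall s, S s -> le s x) /\
  (forall y, P y -> (forall s, S s -> le s y) -> le x y).

Definition compl_join_irr (j : T) : Prop :=
  P j /\ forall S : set T, S `<=` P -> is_join S j -> S j.

Definition spatial : Prop :=
  forall x, P x -> is_join [set j | compl_join_irr j /\ le j x] x.
End Spatial.

(* Main.v *)
Require Import Defs.
From mathcomp Require Import all_boot.
From mathcomp Require Import boolp classical_sets.
Set Implicit Arguments. Unset Strict Implicit. Unset Printing Implicit Defensive.
Local Open Scope classical_set_scope.

Lemma bupE U (R : U -> U -> Prop) X x : bup R X x <-> exists y, R x y /\ X y.
Proof. by split => -[y [H1 H2]]; exists y. Qed.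
Lemma wupE U (R : U -> U -> Prop) X x : wup R X x <-> exists y, R y x /\ X y.
Proof. by split => -[y [H1 H2]]; exists y. Qed.
Lemma bdownE U (R : U -> U -> Prop) X x : bdown R X x <-> forall y, R x y -> X y.
Proof. by split. Qed.
Lemma wdownE U (R : U -> U -> Prop) X x : wdown R X x <-> forall y, R y x -> X y.
Proof. by split. Qed.

Lemma SsingE U (R : U -> U -> Prop) (Rrefl : forall x, R x x) s :
  Ssing R s -> forall t, R s t -> t = s.
Proof.
move=> [y Hy] t Hst.
have h1 : Rimg R s s by exact: Rrefl.
have h2 : Rimg R s t by [].
rewrite Hy /= in h1 h2. by rewrite h2 h1.
Qed.

Lemma F1 U (R : U -> U -> Prop) X : bdown R (wup R (bdown R X)) `<=` bdown R X.
Proof.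
move=> a /bdownE h; apply/bdownE => z Raz.
have /wupE [a' [Ra'z ha']] := h z Raz. exact: (ha' z Ra'z).
Qed.

Lemma F2 U (R : U -> U -> Prop) C : wup R (bdown R C) `<=` C.
Proof. by move=> z /wupE [a [Raz ha]]; exact: ha z Raz. Qed.

Lemma F3 U (R : U -> U -> Prop) X z :
  wup R X z -> exists w, R w z /\ bdown R (wup R X) w.
Proof.
move=> /wupE [w [Rwz Xw]]; exists w; split => //.
by apply/bdownE => t Rwt; apply/wupE; exists w.
Qed.

Lemma F4 U (R : U -> U -> Prop) C : Pwup R C -> wup R (bdown R C) = C.
Proof.
move=> [X eX]; rewrite eX; apply/seteqP; split; first exact: F2.
move=> z Hz; have [w [Rwz hw]] := F3 Hz; apply/wupE; by exists w.
Qed.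

Lemma union_bup U (R : U -> U -> Prop) (G : set (set U)) :
  (forall g, G g -> Pbup R g) -> Pbup R [set b | exists g, G g /\ g b].
Proof.
move=> HG; exists [set w | exists g, G g /\ wdown R g w].
apply/seteqP; split.
- move=> b [g [Gg gb]]; have [X eX] := HG g Gg.
  have := gb; rewrite eX => /bupE [w [Rbw Xw]].
  apply/bupE; exists w; split => //; exists g; split => //.
  by apply/wdownE => v Rvw; rewrite eX; apply/bupE; exists w.
- move=> b /bupE [w [Rbw [g [Gg hw]]]]; exists g; split => //.
  exact: (hw b Rbw).
Qed.

Lemma bsuff U (R : U -> U -> Prop) (G : set (set U)) k :
  Pbup R k -> (forall g, G g -> g `<=` k) -> (forall b, k b -> exists g, G g /\ g b) ->
  is_join (Pbup R) (@set_le U) G k.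
Proof.
move=> Pk Hub H; split => //; split => //.
move=> y Py Hy b kb; have [g [Gg gb]] := H b kb; exact: Hy g Gg b gb.
Qed.

Lemma bnec U (R : U -> U -> Prop) (G : set (set U)) k :
  G `<=` Pbup R -> is_join (Pbup R) (@set_le U) G k ->
  forall b, k b -> exists g, G g /\ g b.
Proof.
move=> HG [Pk [Hub Hl]] b kb.
have PU := union_bup (R:=R) (G:=G) HG.
have := Hl _ PU (fun g Gg b gb => ex_intro _ g (conj Gg gb)).
by move=> /(_ b kb).
Qed.

Lemma suff_join U (R : U -> U -> Prop) (F : set (set U * set U)) p :
  DMRS R p -> (forall f, F f -> pair_le f p) ->
  (forall a z, p.1 a -> R a z -> exists f a', F f /\ f.1 a' /\ R a' z) ->
  (forall b, p.2 b -> exists f, F f /\ f.2 b) ->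
  is_join (DMRS R) (@pair_le U) F p.
Proof.
move=> Hp Hub H1 H2; split => //; split => //.
move=> q [[X eX] _] Hq; split.
- move=> a pa; rewrite eX; apply/bdownE => z Raz.
  have [f [a' [Ff [fa' Ra'z]]]] := H1 a z pa Raz.
  have := (Hq f Ff).1 a' fa'; rewrite eX => /bdownE; apply; exact: Ra'z.
- move=> b pb; have [f [Ff fb]] := H2 b pb; exact: (Hq f Ff).2.
Qed.

Lemma nec_join U (R : U -> U -> Prop) (Rrefl : forall x, R x x)
  (F : set (set U * set U)) p :
  F `<=` DMRS R -> is_join (DMRS R) (@pair_le U) F p ->
  (forall a z, p.1 a -> R a z -> exists f a', F f /\ f.1 a' /\ R a' z) /\
  (forall b, p.2 b -> exists f, F f /\ f.2 b).
Proof.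
move=> HF [Hp [Hub Hl]].
pose U1 := [set a | exists f, F f /\ f.1 a].
pose U2 := [set b | exists f, F f /\ f.2 b].
pose q := (bdown R (wup R U1), U2).
have Hq : DMRS R q.
  split; first by exists (wup R U1).
  split.
    have := union_bup (R:=R) (G := [set g | exists f, F f /\ g = f.2]).
    case.
      by move=> g [f [Ff ->]]; have [_ [H _]] := HF f Ff.
    move=> X eX; exists X; rewrite -eX /q /U2 /=.
    apply/seteqP; split.
      by move=> b [f [Ff fb]]; exists f.2; split => //; exists f.
    by move=> b [g [[f [Ff ->]] fb]]; exists f.
  split.
    move=> b /bupE [w [Rbw /wupE [a [Raw qa]]]].
    have /wupE [a' [Ra'w [f [Ff fa']]]] := qa w Raw.
    exists f; split => //.
    have [_ [_ [Hsub _]]] := HF f Ff; apply: Hsub.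
    by apply/bupE; exists w; split => //; apply/wupE; exists a'.
  apply/seteqP; split => s [h1 Ss]; split => //.
    have /wupE [a' [Ra's [f [Ff fa']]]] := h1 s (Rrefl s).
    exists f; split => //.
    have [_ [_ [Hsub _]]] := HF f Ff; apply: Hsub.
    by apply/bupE; exists s; split => //; apply/wupE; exists a'.
  move: h1 => [f [Ff fs]].
  have [_ [_ [_ HS]]] := HF f Ff.
  have : (f.2 `&` Ssing R) s by [].
  rewrite -HS => -[fs1 _].
  apply/bdownE => z Rsz; have -> := SsingE Rrefl Ss Rsz.
  by apply/wupE; exists s; split => //; exists f.
have Hubq : forall f, F f -> pair_le f q.
  move=> f Ff; split.
    by move=> a fa; apply/bdownE => z Raz; apply/wupE; exists a; split => //; exists f.
  by move=> b fb; exists f.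
have [H1 H2] := Hl q Hq Hubq.
split.
  move=> a z pa Raz.
  have /wupE [a' [Ra'z [f [Ff fa']]]] := H1 a pa z Raz.
  by exists f, a'.
by move=> b pb; have [f [Ff fb]] := H2 b pb; exists f.
Qed.

Lemma T1mem U (R : U -> U -> Prop) (Rrefl : forall x, R x x) k :
  Pbup R k -> (forall s, Ssing R s -> ~ k s) -> DMRS R (set0, k).
Proof.
move=> Pk HS; split.
  exists set0; apply/seteqP; split; first by move=> x [].
  by move=> x h; exact: h x (Rrefl x).
split; first exact: Pk.
split.
  by move=> b /bupE [w [_ /wupE [a [_ []]]]].
apply/seteqP; split => s [h1 h2]; first by case: h1.
by case: (HS s h2 h1).
Qed.

Lemma T1 U (R : U -> U -> Prop) (Rrefl : forall x, R x x) k :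
  compl_join_irr (Pbup R) (@set_le U) k -> (forall s, Ssing R s -> ~ k s) ->
  compl_join_irr (DMRS R) (@pair_le U) (set0, k).
Proof.
move=> [Pk Hk] HS; split; first exact: T1mem.
move=> F HF Hj.
have [_ Hb] := nec_join Rrefl HF Hj.
have [_ [Hub _]] := Hj.
have : [set B | F (set0, B)] k.
  apply: Hk.
    by move=> B GB; have [_ [H _]] := HF _ GB.
  apply: bsuff => //.
    by move=> g Gg; exact: (Hub _ Gg).2.
  move=> b kb; have [f [Ff fb]] := Hb b kb.
  exists f.2; split => //.
  have e : f = (set0, f.2).
    move: f Ff fb => [f1 f2] Ff fb /=; congr pair.
    apply/seteqP; split => x h; [exact: (Hub _ Ff).1 x h | case: h].
  by change (F (set0, f.2)); rewrite -e.
by [].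
Qed.

Lemma T2mem U (R : U -> U -> Prop) (Rrefl : forall x, R x x) c :
  DMRS R (bdown R c, bup R (wup R (bdown R c))).
Proof.
split; first by exists c.
split; first by exists (wup R (bdown R c)).
split; first by [].
apply/seteqP; split => s [h1 Ss]; split => //=.
  by apply/bupE; exists s; split => //; apply/wupE; exists s.
move: h1 => /bupE [t [Rst ht]].
have et := SsingE Rrefl Ss Rst; rewrite et in ht.
move: ht => /wupE [a [Ras ha]].
apply/bdownE => z Rsz; rewrite (SsingE Rrefl Ss Rsz); exact: ha s Ras.
Qed.

Lemma T2le U (R : U -> U -> Prop) p a c :
  DMRS R p -> p.1 a -> (forall t, c t -> R a t) ->
  pair_le (bdown R c, bup R (wup R (bdown R c))) p.
Proof.
move=> [[X1 e1] [_ [Hsub _]]] pa hc.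
have h : bdown R c `<=` p.1.
  move=> t ht; rewrite e1; apply: F1; rewrite -e1.
  apply/bdownE => u Rtu; apply/wupE; exists a; split => //.
  exact: hc u (ht u Rtu).
split => //=.
move=> b /bupE [w [Rbw /wupE [t [Rtw ht]]]]; apply: Hsub.
by apply/bupE; exists w; split => //; apply/wupE; exists t; split => //; apply: h.
Qed.

Lemma T2 U (R : U -> U -> Prop) (Rrefl : forall x, R x x) c :
  compl_join_irr (Pwup R) (@set_le U) c ->
  compl_join_irr (DMRS R) (@pair_le U) (bdown R c, bup R (wup R (bdown R c))).
Proof.
move=> [Pc Hc]; split; first exact: T2mem.
move=> F HF Hj.
have [Ha _] := nec_join Rrefl HF Hj.
have [_ [Hub _]] := Hj.
have : [set C | exists f, F f /\ C = wup R f.1] c.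
  apply: Hc.
    by move=> C [f [Ff ->]]; exists f.1.
  apply: (@bsuff _ (fun x y => R y x)) => //.
    move=> C [f [Ff ->]] z /wupE [a [Raz fa]].
    exact: (Hub f Ff).1 a fa z Raz.
  move=> z cz.
  case: Pc => X eX; rewrite eX in cz.
  have [w [Rwz hw]] := F3 cz; rewrite -eX in hw.
  have [f [a' [Ff [fa' Ra'z]]]] := Ha w z hw Rwz.
  exists (wup R f.1); split; first by exists f.
  by apply/wupE; exists a'.
move=> [f [Ff ec]].
have [[Y eY] [_ [Hsub _]]] := HF f Ff.
have e1 : f.1 = bdown R c.
  apply/seteqP; split; first exact: (Hub f Ff).1.
  move=> a ha; have : bdown R (wup R f.1) a by rewrite -ec.
  rewrite eY; exact: F1.
have e2 : f.2 = bup R (wup R (bdown R c)).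
  apply/seteqP; split; first exact: (Hub f Ff).2.
  by rewrite -e1.
suff -> : (bdown R c, bup R (wup R (bdown R c))) = f by [].
by rewrite -e2 -e1 -surjective_pairing.
Qed.

Lemma LA U (R : U -> U -> Prop) (Rrefl : forall x, R x x) j :
  compl_join_irr (DMRS R) (@pair_le U) j -> (forall a, ~ j.1 a) ->
  compl_join_irr (Pbup R) (@set_le U) j.2.
Proof.
move=> [Pj Hj] Hne; have Pj' := Pj.
move: Pj' => [_ [Pj2 [_ HS]]].
split; first exact: Pj2.
move=> G HG Hjo.
have [_ [HubG _]] := Hjo.
have : [set p | p.1 = set0 /\ G p.2] j.
  apply: Hj.
    move=> [p1 p2] [/= -> Gp]; apply: T1mem => //; first exact: HG.
    move=> s Ss hs.
    have : (j.2 `&` Ssing R) s by split => //; exact: HubG p2 Gp s hs.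
    by rewrite -HS => -[h _]; exact: Hne s h.
  apply: suff_join => //.
  - move=> p [e Gp]; split; first by rewrite e => x [].
    exact: HubG _ Gp.
  - by move=> a z ja; case: (Hne a ja).
  - move=> b jb; have [g [Gg gb]] := bnec HG Hjo jb.
    by exists (set0, g).
by move=> [_ ?].
Qed.

Lemma LB U (R : U -> U -> Prop) (Rrefl : forall x, R x x) j a0 :
  compl_join_irr (DMRS R) (@pair_le U) j -> j.1 a0 ->
  compl_join_irr (Pwup R) (@set_le U) (wup R j.1).
Proof.
move=> [Pj Hj] ha0; have Pj' := Pj.
move: Pj' => [[X1 e1] [[X2 e2] [Hsub HS]]].
split; first by exists j.1.
move=> CC HC Hjo.
have Hcov := @bnec _ (fun x y => R y x) CC (wup R j.1) HC Hjo.
have [_ [HubC _]] := Hjo.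
have hbC : forall C, CC C -> bdown R C `<=` j.1.
  move=> C HCC a ha; rewrite e1; apply: F1; rewrite -e1.
  apply/bdownE => z Raz; exact: HubC C HCC z (ha z Raz).
have : [set p | (exists C, CC C /\ p = (bdown R C, bup R (wup R (bdown R C)))) \/
         (p.1 = set0 /\ Pbup R p.2 /\ p.2 `<=` j.2 /\ forall s, Ssing R s -> ~ p.2 s)] j.
  apply: Hj.
    move=> p [[C [_ ->]] | [e [PB [_ HnS]]]]; first exact: T2mem.
    by move: p e PB HnS => [p1 p2] /= -> PB HnS; exact: T1mem.
  apply: suff_join => //.
  - move=> p [[C [HCC ->]] | [e [_ [Hs _]]]].
      split; first exact: hbC.
      move=> b /bupE [w [Rbw /wupE [a [Raw ha]]]]; apply: Hsub.
      by apply/bupE; exists w; split => //; apply/wupE; exists a; split => //; exact: hbC ha.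
    by split => //; rewrite e => x [].
  - move=> a z ja Raz.
    have [C [HCC Cz]] : exists C, CC C /\ C z by apply: Hcov; apply/wupE; exists a.
    have [X eX] := HC C HCC; rewrite eX in Cz.
    have [w [Rwz hw]] := F3 Cz; rewrite -eX in hw.
    exists (bdown R C, bup R (wup R (bdown R C))), w; split => //.
    by left; exists C.
  - move=> b jb; have := jb; rewrite e2 => /bupE [w [Rbw Xw]].
    have jw : j.2 w by rewrite e2; apply/bupE; exists w.
    case: (pselect (Ssing R w)) => Sw.
      have j1w : j.1 w.
        have : (j.2 `&` Ssing R) w by [].
        by rewrite -HS => -[].
      have [C [HCC Cw]] : exists C, CC C /\ C w by apply: Hcov; apply/wupE; exists w.
      exists (bdown R C, bup R (wup R (bdown R C))); split; first by left; exists C.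
      apply/bupE; exists w; split => //; apply/wupE; exists w; split => //.
      by apply/bdownE => z Rwz; rewrite (SsingE Rrefl Sw Rwz).
    exists (set0, bup R [set w]); split; last by apply/bupE; exists w.
    right; split => //; split; first by exists [set w].
    split.
      move=> z /bupE [t [Rzt et]].
      by apply/bupE; exists w; split => //; rewrite -et.
    move=> s Ss /bupE [t [Rst et]].
    have := SsingE Rrefl Ss Rst; rewrite et => ews.
    by apply: Sw; rewrite ews.
move=> [[C [HCC ej]] | [e _]].
  by rewrite ej /= F4 //; exact: HC.
by move: ha0; rewrite e.
Qed.

Lemma spatB_nec U (R : U -> U -> Prop) :
  spatial (Pbup R) (@set_le U) ->
  forall y x, R y x -> exists k, compl_join_irr (Pbup R) (@set_le U) k /\ k y /\
                              forall z, k z -> R z x.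
Proof.
move=> Hsp y x Ryx.
have P : Pbup R (bup R [set x]) by exists [set x].
have Hj := Hsp _ P.
have HJ : [set j | compl_join_irr (Pbup R) (@set_le U) j /\ set_le j (bup R [set x])]
            `<=` Pbup R by move=> j [[Pj _] _].
have [k [[Ck hk] ky]] := bnec HJ Hj (proj2 (bupE _ _ _) (ex_intro _ x (conj Ryx erefl))).
exists k; split => //; split => //.
by move=> z kz; have /bupE [t [Rzt et]] := hk z kz; rewrite -et.
Qed.

Lemma spatB_suff U (R : U -> U -> Prop) :
  (forall y x, R y x -> exists k, compl_join_irr (Pbup R) (@set_le U) k /\ k y /\
                              forall z, k z -> R z x) ->
  spatial (Pbup R) (@set_le U).
Proof.
move=> H Y [X eX]; rewrite eX; apply: bsuff; first by exists X.
  by move=> g [_ h].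
move=> b /bupE [x [Rbx Xx]]; have [k [Ck [kb hk]]] := H b x Rbx.
exists k; split => //; split => //.
by move=> z kz; apply/bupE; exists x; split => //; exact: hk.
Qed.

Theorem mainTheorem5 (U : Type) (R : U -> U -> Prop) (Rrefl : forall x, R x x) :
  spatial (DMRS R) (@pair_le U) <->
  spatial (Pbup R) (@set_le U) /\ spatial (Pwup R) (@set_le U).
Proof.
have HJ : forall p, [set j | compl_join_irr (DMRS R) (@pair_le U) j /\ pair_le j p]
            `<=` DMRS R by move=> p j [[Pj _] _].
split.
  move=> Hsp; split.
    apply: spatB_suff => y x Ryx.
    case: (pselect (Ssing R x)) => Sx.
      exists (bup R [set x]); split.
        split; first by exists [set x].
        move=> G HG Hjo.
        have [g [Gg gx]] := bnec HG Hjo (proj2 (bupE _ _ _) (ex_intro _ x (conj (Rrefl x) erefl))).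
        have [X eX] := HG g Gg.
        have := gx; rewrite eX => /bupE [w [Rxw Xw]].
        have ewx := SsingE Rrefl Sx Rxw; rewrite ewx in Xw.
        suff <- : g = bup R [set x] by [].
        apply/seteqP; split; first exact: (proj1 (proj2 Hjo)) g Gg.
        move=> z /bupE [t [Rzt et]]; rewrite eX; apply/bupE; exists x.
        by split => //; rewrite -et.
      split; first by apply/bupE; exists x.
      by move=> z /bupE [t [Rzt et]]; rewrite -et.
    have He : DMRS R (set0, bup R [set x]).
      apply: T1mem => //; first by exists [set x].
      move=> s Ss /bupE [t [Rst et]].
      have := SsingE Rrefl Ss Rst; rewrite et => exs.
      by apply: Sx; rewrite exs.
    have [_ Hb] := nec_join Rrefl (HJ _) (Hsp _ He).
    have [j [[Cj hle] jy]] := Hb y (proj2 (bupE _ _ _) (ex_intro _ x (conj Ryx erefl))).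
    exists j.2; split.
      apply: LA => // a ja; exact: hle.1 a ja.
    split => //.
    by move=> z jz; have /bupE [t [Rzt et]] := hle.2 z jz; rewrite -et.
  change (spatial (Pbup (fun x y => R y x)) (@set_le U)).
  apply: spatB_suff => y x Rxy.
  pose c0 := wup R [set x].
  have He := T2mem Rrefl c0.
  have [Ha _] := nec_join Rrefl (HJ _) (Hsp _ He).
  have hx : bdown R c0 x.
    by apply/bdownE => z Rxz; apply/wupE; exists x.
  have [j [a' [[Cj hle] [ja' Ra'y]]]] := Ha x y hx Rxy.
  exists (wup R j.1); split; first exact: (LB Rrefl Cj ja').
  split; first by apply/wupE; exists a'.
  move=> z /wupE [a [Raz ja]].
  have := hle.1 a ja z Raz => /wupE [t [Rtz et]].
  by rewrite -et.
move=> [HB HW].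
have CB := spatB_nec HB.
have CW := @spatB_nec _ (fun x y => R y x) HW.
move=> p Hp; apply: suff_join => //.
- by move=> f [_ hle].
- move=> a z pa Raz.
  have [c [Cc [cz hc]]] := CW z a Raz.
  have Cc' : compl_join_irr (Pwup R) (@set_le U) c by exact: Cc.
  have [X eX] := Cc'.1.
  have cz' := cz; rewrite eX in cz'.
  have [w [Rwz hw]] := F3 cz'; rewrite -eX in hw.
  exists (bdown R c, bup R (wup R (bdown R c))), w; split => //.
  split; first exact: T2.
  exact: T2le Hp pa hc.
- move: (Hp) => [[X1 e1] [[X2 e2] [_ HS]]].
  move=> b pb; have := pb; rewrite e2 => /bupE [w [Rbw Xw]].
  have pw : p.2 w by rewrite e2; apply/bupE; exists w.
  case: (pselect (Ssing R w)) => Sw.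
    have p1w : p.1 w.
      have : (p.2 `&` Ssing R) w by [].
      by rewrite -HS => -[].
    have [c [Cc [cw hc]]] := CW w w (Rrefl w).
    have Cc' : compl_join_irr (Pwup R) (@set_le U) c by exact: Cc.
    exists (bdown R c, bup R (wup R (bdown R c))); split.
      split; first exact: T2.
      exact: T2le Hp p1w hc.
    apply/bupE; exists w; split => //; apply/wupE; exists w; split => //.
    by apply/bdownE => z Rwz; rewrite (SsingE Rrefl Sw Rwz).
  have [k [Ck [kb hk]]] := CB b w Rbw.
  exists (set0, k); split => //.
  split.
    apply: T1 => // s Ss ks.
    have := SsingE Rrefl Ss (hk s ks) => ews.
    by apply: Sw; rewrite ews.
  split; first by move=> x [].
  by move=> z kz; rewrite e2; apply/bupE; exists w; split => //; exact: hk.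
Qed.
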